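(* Let $G$ and $H$ be graphs with $i_G$ and $i_H$ isolated vertices, respectively. Then $$\rho(G\times H)\geq\max\{\rho_o(G^-)\rho(H^-),\ \rho_o(H^-)\rho(G^-)\}+i_G|V(H)|+i_H|V(G)|-i_Gi_H.$$
   Context: All graphs are finite and simple. $G^-$ denotes the graph obtained from $G$ by deleting all isolated vertices. A packing of $G$ is a set $P\subseteq V(G)$ with $N[u]\cap N[v]=\emptyset$ for all distinct $u,v\in P$ ($N[\cdot]$ the closed neighborhood); $\rho(G)$ is the maximum size of a packing. An open packing is a set whose vertices have pairwise disjoint open neighborhoods; $\rho_o(G)$ is its maximum size. The direct product $G\times H$ has vertex set $V(G)\times V(H)$, with $(g,h)$ adjacent to $(g',h')$ iff $gg'\in E(G)$ and $hh'\in E(H)$. *)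

(* Defs.v *)
From mathcomp Require Import all_boot.
Set Implicit Arguments. Unset Strict Implicit. Unset Printing Implicit Defensive.

Definition simple_graph (T : finType) (e : rel T) : Prop := symmetric e /\ irreflexive e.

Definition cnbhd (T : finType) (e : rel T) (x : T) : {set T} := [set y | (y == x) || e x y].
Definition onbhd (T : finType) (e : rel T) (x : T) : {set T} := [set y | e x y].

Definition packing (T : finType) (e : rel T) (P : {set T}) : bool :=
  [forall u in P, forall v in P, (u != v) ==> [disjoint cnbhd e u & cnbhd e v]].
Definition open_packing (T : finType) (e : rel T) (P : {set T}) : bool :=
  [forall u in P, forall v in P, (u != v) ==> [disjoint onbhd e u & onbhd e v]].

Definition rho (T : finType) (e : rel T) : nat := \max_(P : {set T} | packing e P) #|P|.
Definition rho_o (T : finType) (e : rel T) : nat := \max_(P : {set T} | open_packing e P) #|P|.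

Definition isolated (T : finType) (e : rel T) (x : T) : bool := [forall y, ~~ e x y].
Definition niso (T : finType) (e : rel T) : nat := #|[set x | isolated e x]|.

(* G^- : the induced subgraph on the non-isolated vertices *)
Definition nonisoT (T : finType) (e : rel T) : finType := {x : T | ~~ isolated e x}.
Definition noniso_rel (T : finType) (e : rel T) : rel (nonisoT e) :=
  fun x y => e (val x) (val y).

Definition dprod_rel (T1 T2 : finType) (e1 : rel T1) (e2 : rel T2) : rel (T1 * T2)%type :=
  fun x y => e1 x.1 y.1 && e2 x.2 y.2.
Arguments noniso_rel {T} e _ _.
Arguments nonisoT {T} e.

(* Main.v *)
Require Import Defs.
From mathcomp Require Import all_boot.
Set Implicit Arguments. Unset Strict Implicit. Unset Printing Implicit Defensive.

Definition op (T : finType) (e : rel T) (A : {set T}) :=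
  forall x y z, x \in A -> y \in A -> x != y -> e x z -> e y z -> False.
Definition na (T : finType) (e : rel T) (A : {set T}) :=
  forall x y, x \in A -> y \in A -> e x y -> False.
Definition ni (T : finType) (e : rel T) (A : {set T}) :=
  forall x, x \in A -> ~~ isolated e x.

Lemma adj_noniso (T : finType) (e : rel T) x z : symmetric e -> e x z -> ~~ isolated e z.
Proof. move=> sy exz; apply/forallPn; exists x; by rewrite negbK sy. Qed.

Lemma lift_op (T : finType) (e : rel T) (A : {set nonisoT e}) :
  symmetric e -> open_packing (noniso_rel e) A -> op e (val @: A).
Proof.
move=> sy /forall_inP H x y z /imsetP[x' Hx' ->] /imsetP[y' Hy' ->] nxy exz eyz.
have Hz := adj_noniso sy exz.
have := H x' Hx' => /forall_inP /(_ y' Hy') /implyP.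
have nxy' : x' != y' by apply: contra nxy => /eqP ->.
move=> /(_ nxy') D.
have := @disjointFr _ _ _ (exist _ z Hz) D.
by rewrite !inE /noniso_rel /= exz eyz => /(_ isT).
Qed.

Lemma lift_op2 (T : finType) (e : rel T) (A : {set nonisoT e}) :
  symmetric e -> irreflexive e -> packing (noniso_rel e) A -> op e (val @: A) /\ na e (val @: A).
Proof.
move=> sy irr /forall_inP H; split.
- move=> x y z /imsetP[x' Hx' ->] /imsetP[y' Hy' ->] nxy exz eyz.
  have Hz := adj_noniso sy exz.
  have := H x' Hx' => /forall_inP /(_ y' Hy') /implyP.
  have nxy' : x' != y' by apply: contra nxy => /eqP ->.
  move=> /(_ nxy') D.
  have := @disjointFr _ _ _ (exist _ z Hz) D.
  by rewrite !inE /noniso_rel /= exz eyz !orbT => /(_ isT).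
- move=> x y /imsetP[x' Hx' ->] /imsetP[y' Hy' ->] exy.
  have := H x' Hx' => /forall_inP /(_ y' Hy') /implyP.
  have nxy' : x' != y'.
    apply/eqP => E; subst y'. by rewrite irr in exy.
  move=> /(_ nxy') D.
  have := @disjointFr _ _ _ y' D.
  by rewrite !inE /noniso_rel /= exy eqxx orbT => /(_ isT).
Qed.

Lemma ni_lift (T : finType) (e : rel T) (A : {set nonisoT e}) : ni e (val @: A).
Proof. by move=> x /imsetP[x' _ ->]; apply: (valP x'). Qed.

Lemma prod_packing (T1 T2 : finType) (e1 : rel T1) (e2 : rel T2) A B :
  simple_graph e1 -> simple_graph e2 ->
  op e1 A -> op e2 B -> (na e1 A \/ na e2 B) -> ni e1 A -> ni e2 B ->
  packing (dprod_rel e1 e2) (setX A B :|: [set p | isolated e1 p.1 || isolated e2 p.2]).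
Proof.
move=> [sy1 ir1] [sy2 ir2] oA oB nAB iA iB.
apply/forall_inP => u Hu; apply/forall_inP => v Hv; apply/implyP => nuv.
rewrite -setI_eq0; apply/eqP/setP => z; rewrite !inE /dprod_rel.
apply/negbTE/negP => /andP[Hzu Hzv].
have isoc : forall u v, u != v -> isolated e1 u.1 || isolated e2 u.2 ->
   (z == u) || e1 u.1 z.1 && e2 u.2 z.2 -> (z == v) || e1 v.1 z.1 && e2 v.2 z.2 -> False.
  move=> a b nab /orP[/forallP I|/forallP I].
  - case/orP=> [/eqP Ez|/andP[E _]]; last by move: (I z.1); rewrite E.
    subst z; case/orP=> [/eqP Eab|/andP[E _]]; first by rewrite Eab eqxx in nab.
    by move: (I b.1); rewrite sy1 E.
  - case/orP=> [/eqP Ez|/andP[_ E]]; last by move: (I z.2); rewrite E.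
    subst z; case/orP=> [/eqP Eab|/andP[_ E]]; first by rewrite Eab eqxx in nab.
    by move: (I b.2); rewrite sy2 E.
move: Hu Hv; rewrite !inE => Hu Hv.
case/orP: Hu => [Hu|Hu]; last by apply: (isoc u v nuv Hu Hzu Hzv).
case/orP: Hv => [Hv|Hv]; last by apply: (isoc v u _ Hv Hzv Hzu); rewrite eq_sym.
case/andP: Hu => Hu1 Hu2; case/andP: Hv => Hv1 Hv2.
case: u v nuv Hzu Hzv Hu1 Hu2 Hv1 Hv2 => [x1 y1] [x2 y2] /= nuv Hzu Hzv Hx1 Hy1 Hx2 Hy2.
have adjc : forall a1 b1 a2 b2, a1 \in A -> b1 \in B -> a2 \in A -> b2 \in B ->
   e1 a1 a2 -> e2 b1 b2 -> False.
  move=> a1 b1 a2 b2 ha1 hb1 ha2 hb2 ea eb.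
  by case: nAB => N; [apply: (N a1 a2) | apply: (N b1 b2)].
case/orP: Hzu => [/eqP Ez|/andP[E1 E2]].
  subst z; case/orP: Hzv => [/eqP E|/andP[E1 E2]]; first by rewrite E eqxx in nuv.
  by apply: (adjc x2 y2 x1 y1).
case/orP: Hzv => [/eqP Ez|/andP[F1 F2]].
  subst z; by apply: (adjc x1 y1 x2 y2).
have [ex|nx] := eqVneq x1 x2.
  subst x2; have ny : y1 != y2 by apply: contra nuv => /eqP ->.
  by apply: (oB y1 y2 z.2).
by apply: (oA x1 x2 z.1).
Qed.

Lemma count_Q (T1 T2 : finType) (e1 : rel T1) (e2 : rel T2) A B :
  ni e1 A -> ni e2 B ->
  #|setX A B :|: [set p | isolated e1 p.1 || isolated e2 p.2]| =
  #|A| * #|B| + (niso e1 * #|T2| + niso e2 * #|T1| - niso e1 * niso e2).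
Proof.
move=> iA iB.
set S := [set p | _].
have dj : setX A B :&: S = set0.
  apply/setP => [[x y]]; rewrite !inE /=.
  apply/negbTE; rewrite negb_and negb_or.
  case: (boolP (x \in A)) => hx //=; case: (boolP (y \in B)) => hy //=.
  by rewrite (iA x hx) (iB y hy).
have := cardsUI (setX A B) S; rewrite dj cards0 addn0 => ->; rewrite cardsX.
congr (_ + _).
have eS : S = setX [set x | isolated e1 x] setT :|: setX setT [set y | isolated e2 y].
  by apply/setP => -[x y]; rewrite !inE /= andbT.
have eI : setX [set x | isolated e1 x] [set: T2] :&: setX [set: T1] [set y | isolated e2 y]
   = setX [set x | isolated e1 x] [set y | isolated e2 y].
  by apply/setP => -[x y]; rewrite !inE /= andbT.
have := cardsUI (setX [set x | isolated e1 x] [set: T2]) (setX [set: T1] [set y | isolated e2 y]).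
rewrite -eS eI !cardsX !cardsT /niso => E.
rewrite [#|T1| * _]mulnC in E. rewrite -E. by rewrite addnK.
Qed.

Lemma max_set (T : finType) (p : pred {set T}) : p set0 -> {P | p P & \max_(Q | p Q) #|Q| = #|P|}.
Proof.
move=> p0; have := @eq_bigmax_cond _ p (fun Q => #|Q|).
case; [by apply/card_gt0P; exists set0 | move=> P HP E; by exists P].
Qed.

Lemma pack0 (T : finType) (e : rel T) : packing e set0.
Proof. by apply/forall_inP => u; rewrite inE. Qed.
Lemma opack0 (T : finType) (e : rel T) : open_packing e set0.
Proof. by apply/forall_inP => u; rewrite inE. Qed.

From mathcomp Require Import zify.

Theorem mainTheorem12 (T1 T2 : finType) (e1 : rel T1) (e2 : rel T2) :
  simple_graph e1 -> simple_graph e2 ->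
  maxn (rho_o (noniso_rel e1) * rho (noniso_rel e2))
       (rho_o (noniso_rel e2) * rho (noniso_rel e1))
  + niso e1 * #|T2| + niso e2 * #|T1| - niso e1 * niso e2
  <= rho (dprod_rel e1 e2).
Proof.
move=> s1 s2; have [sy1 ir1] := s1; have [sy2 ir2] := s2.
have [O1 HO1 EO1] := max_set (opack0 (noniso_rel e1)).
have [O2 HO2 EO2] := max_set (opack0 (noniso_rel e2)).
have [P1 HP1 EP1] := max_set (pack0 (noniso_rel e1)).
have [P2 HP2 EP2] := max_set (pack0 (noniso_rel e2)).
rewrite /rho_o /rho EO1 EO2 EP1 EP2.
have c1 : niso e1 * niso e2 <= niso e1 * #|T2|.
  by apply: leq_mul => //; apply: max_card.
have key : forall A B, op e1 A -> op e2 B -> (na e1 A \/ na e2 B) -> ni e1 A -> ni e2 B ->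
   #|A| * #|B| + niso e1 * #|T2| + niso e2 * #|T1| - niso e1 * niso e2 <= rho (dprod_rel e1 e2).
  move=> A B oA oB nAB iA iB.
  have := @leq_bigmax_cond _ (packing (dprod_rel e1 e2)) (fun Q => #|Q|) _ (prod_packing s1 s2 oA oB nAB iA iB).
  rewrite count_Q // => h; apply: leq_trans h; rewrite addnBA ?addnA //; exact: leq_trans c1 (leq_addr _ _).
have cO1 : #|[set val x | x in O1]| = #|O1| by apply: card_imset; apply: val_inj.
have cO2 : #|[set val x | x in O2]| = #|O2| by apply: card_imset; apply: val_inj.
have cP1 : #|[set val x | x in P1]| = #|P1| by apply: card_imset; apply: val_inj.
have cP2 : #|[set val x | x in P2]| = #|P2| by apply: card_imset; apply: val_inj.
have [oP1 nP1] := lift_op2 sy1 ir1 HP1.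
have [oP2 nP2] := lift_op2 sy2 ir2 HP2.
rewrite /maxn; case: ifP => _.
- have := key _ _ oP1 (lift_op sy2 HO2) (or_introl nP1) (@ni_lift _ _ P1) (@ni_lift _ _ O2).
  by rewrite cO2 cP1 [#|P1| * _]mulnC.
- have := key _ _ (lift_op sy1 HO1) oP2 (or_intror nP2) (@ni_lift _ _ O1) (@ni_lift _ _ P2).
  by rewrite cO1 cP2.
Qed.
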